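(* Let $\rho>3$ be an odd prime. Then $\mathrm{ord}_{4\rho}(3)=\rho-1$ if and only if one of the following holds: (1) $\rho\equiv \pm 5\pmod{12}$ and $\mathrm{ord}_\rho(3)=\rho-1$; (2) $\rho\equiv -1\pmod{12}$ and $\mathrm{ord}_\rho(3)=\frac{\rho-1}{2}$.
   Context: $\mathrm{ord}_M(a)$ denotes the multiplicative order of $a$ modulo $M$. *)

(* Defs.v *)
From mathcomp Require Import all_boot.
Set Implicit Arguments. Unset Strict Implicit. Unset Printing Implicit Defensive.

Definition mult_order (M a k : nat) : Prop :=
  0 < k /\ a ^ k = 1 %[mod M] /\
  (forall j, 0 < j -> a ^ j = 1 %[mod M] -> k <= j).

(* Main.v *)
Require Import Defs.
From mathcomp Require Import all_boot all_order all_algebra all_fingroup all_solvable all_field.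
From mathcomp Require Import zify ring.
Set Implicit Arguments. Unset Strict Implicit. Unset Printing Implicit Defensive.
Import GRing.Theory.
Local Open Scope ring_scope.

Section Fp.
Variable p : nat.
Hypothesis hp : prime p.
Hypothesis h3 : (3 < p)%N.
Local Notation F := ('F_p).
Local Notation n := (p - 1)%N.
Local Notation h := ((p - 1) %/ 2)%N.

Lemma Fp_eq_nat (a b : nat) : ((a%:R : F) = b%:R) <-> (a = b %[mod p])%N.
Proof.
split => [H|H]; first by have := congr1 (fun x : F => nat_of_ord x) H; rewrite /= !val_Fp_nat.
by rewrite -(Fp_nat_mod hp) H Fp_nat_mod.
Qed.

Lemma Fp_nat_neq0 (a : nat) : (0 < a < p)%N -> (a%:R : F) != 0.
Proof.
move=> Ha; apply/eqP => /(Fp_eq_nat a 0); rewrite mod0n modn_small; lia.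
Qed.

Lemma Fermat (y : F) : y != 0 -> y ^+ n = 1.
Proof.
move=> y0; have := expf_card y; rewrite card_Fp //.
have E : (p = n.+1)%N by have := prime_gt0 hp; lia.
rewrite {3}E exprS => H; apply: (mulfI y0); by rewrite H mulr1.
Qed.

Lemma prim : exists g : F, n.-primitive_root g.
Proof.
have Hpos : (0 < n)%N by lia.
have Hall : all n.-unity_root (enum (predC1 (0:F))).
  by apply/allP => x; rewrite mem_enum /= => x0; rewrite unity_rootE Fermat.
have Hs : (n <= size (enum (predC1 (0%R:F))))%N.
  rewrite -cardE cardC1 card_Fp //; lia.
have := has_prim_root Hpos Hall (enum_uniq _) Hs.
by move/hasP => [g _ Hg]; exists g.
Qed.

Lemma n2 : n = (h * 2)%N.
Proof.
have : odd p by apply/negP => /negP/(prime_oddPn hp) => E; lia.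
move=> Ho; have : (p %% 2 = 1)%N by rewrite modn2 Ho.
lia.
Qed.

Lemma p_gt4 : (4 < p)%N.
Proof. have : p != 4%N by apply/eqP => E; move: hp; rewrite E. lia. Qed.

Lemma Euler_hard (y : F) : y != 0 -> y ^+ h = 1 -> exists z, y = z ^+ 2.
Proof.
move=> y0; have [g Hg] := prim.
have [[i _] /= ->] := prim_rootP Hg (Fermat y0).
rewrite -exprM => /eqP; rewrite -(prim_order_dvd Hg) => Hi0.
have : (2 * h %| i * h)%N by rewrite mulnC -n2.
rewrite dvdn_pmul2r; last by have := n2; lia.
move=> Hi; exists (g ^+ (i %/ 2)); by rewrite -exprM divnK.
Qed.

Lemma e_pm (y : F) : y != 0 -> y ^+ h = 1 \/ y ^+ h = -1.
Proof.
move=> y0; have : (y ^+ h) ^+ 2 == 1 by rewrite -exprM -n2 Fermat.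
by rewrite sqrf_eq1 => /orP[/eqP|/eqP]; [left|right].
Qed.

Lemma two_neq0 : (2 : F) != 0.
Proof. apply: Fp_nat_neq0; lia. Qed.
Lemma three_neq0 : (3 : F) != 0.
Proof. apply: Fp_nat_neq0; lia. Qed.

Lemma sq_m3_dvd (y : F) : y ^+ 2 = -3 -> (3 %| n)%N.
Proof.
move=> hy; pose w := (y - 1) / 2.
have hw : w ^+ 2 + w + 1 = 0.
  have -> : w ^+ 2 + w + 1 = (y ^+ 2 + 3) / 4 :> F.
    rewrite /w; field.
    rewrite two_neq0 andbT; apply: (@Fp_nat_neq0 4); have := p_gt4; lia.
  by rewrite hy addNr mul0r.
have w3 : w ^+ 3 = 1.
  apply/eqP; rewrite -subr_eq0.
  have -> : w ^+ 3 - 1 = (w - 1) * (w ^+ 2 + w + 1) by ring.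
  by rewrite hw mulr0.
have w1 : w != 1.
  apply/eqP => E; move: hw; rewrite E expr1n => /eqP; apply/negP.
  have -> : (1 + 1 + 1 : F) = 3 by ring.
  exact: three_neq0.
have w0 : w != 0.
  apply/eqP => E; move: hw; rewrite E expr0n /= add0r add0r => /eqP.
  by rewrite oner_eq0.
have := Fermat w0.
rewrite {1}(divn_eq n 3) exprD mulnC exprM w3 expr1n mul1r /dvdn.
have : (n %% 3 < 3)%N by rewrite ltn_mod.
case: (n %% 3)%N => [|[|[|//]]] // _.
- by rewrite expr1 => E; rewrite E eqxx in w1.
- move=> E; move: w3; rewrite exprS E mulr1 => E'; by rewrite E' eqxx in w1.
Qed.

Lemma dvd_sq_m3 : (3 %| n)%N -> exists y : F, y ^+ 2 = -3.
Proof.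
move=> d3; have [g Hg] := prim; pose w := g ^+ (n %/ 3).
have w3 : w ^+ 3 = 1 by rewrite -exprM divnK // prim_expr_order.
have w1 : w != 1.
  rewrite /w -(prim_order_dvd Hg); apply/negP => /dvdn_leq.
  have : (0 < n %/ 3)%N by rewrite divn_gt0 //; lia.
  move=> H /(_ H); rewrite leq_divRL //; lia.
have hw : w ^+ 2 + w + 1 = 0.
  have : (w - 1) * (w ^+ 2 + w + 1) = 0.
    have -> : (w - 1) * (w ^+ 2 + w + 1) = w ^+ 3 - 1 by ring.
    by rewrite w3 subrr.
  by move/eqP; rewrite mulf_eq0 subr_eq0 (negbTE w1) => /eqP.
exists (2 * w + 1).
have -> : (2 * w + 1) ^+ 2 = 4 * (w ^+ 2 + w + 1) - 3 by ring.
by rewrite hw mulr0 add0r.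
Qed.


Lemma m3_split : (-3 : F) ^+ h = (-1) ^+ h * 3 ^+ h.
Proof. by rewrite -exprMn mulN1r. Qed.

Lemma m3_sq_e : (3 %| n)%N -> (-3 : F) ^+ h = 1.
Proof.
move=> d3; have [y hy] := dvd_sq_m3 d3.
have y0 : y != 0.
  apply/eqP => E; move: hy; rewrite E expr0n /= => /eqP; rewrite eq_sym oppr_eq0.
  by rewrite (negbTE three_neq0).
by rewrite -hy -exprM mulnC -n2 Fermat.
Qed.

Lemma neg1_even k : (h = k * 2)%N -> (-1 : F) ^+ h = 1.
Proof. by move=> ->; rewrite [(k * 2)%N]mulnC exprM sqrrN expr1n expr1n. Qed.

Lemma neg1_odd k : (h = k * 2 + 1)%N -> (-1 : F) ^+ h = -1.
Proof. by move=> ->; rewrite exprD [(k * 2)%N]mulnC exprM sqrrN expr1n expr1n mul1r expr1. Qed.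

Lemma e3_1 : (p %% 12 = 1 \/ p %% 12 = 11)%N -> (3 : F) ^+ h = 1.
Proof.
case=> Hp.
  have E := m3_sq_e ltac:(lia).
  by move: E; rewrite m3_split (@neg1_even (3 * (p %/ 12))) ?mul1r //; lia.
have E1 := @neg1_odd (3 * (p %/ 12) + 2) ltac:(lia).
have [E|E] := e_pm (y := -3) ltac:(by rewrite oppr_eq0 three_neq0).
  have [y hy] := Euler_hard (y := -3) ltac:(by rewrite oppr_eq0 three_neq0) E.
  have := sq_m3_dvd (esym hy); lia.
move: E; rewrite m3_split E1 mulN1r => /oppr_inj; done.
Qed.

Lemma e3_7 : (p %% 12 = 7)%N -> (3 : F) ^+ h != 1.
Proof.
move=> Hp.
have E := m3_sq_e ltac:(lia).
have E1 := @neg1_odd (3 * (p %/ 12) + 1) ltac:(lia).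
move: E; rewrite m3_split E1 mulN1r => E; apply/eqP => E'.
move: E; rewrite E' => /eqP; rewrite eq_sym -subr_eq0 opprK.
have -> : (1 + 1 : F) = 2 by ring.
by rewrite (negbTE two_neq0).
Qed.

End Fp.

Lemma K1n p : prime p -> (3 < p)%N -> (p %% 12 = 1 \/ p %% 12 = 11)%N ->
  (3 ^ ((p - 1) %/ 2) = 1 %[mod p])%N.
Proof. move=> hp h3 H; apply/(Fp_eq_nat hp); rewrite natrX; exact: e3_1. Qed.

Lemma K7n p : prime p -> (3 < p)%N -> (p %% 12 = 7)%N ->
  (3 ^ ((p - 1) %/ 2) <> 1 %[mod p])%N.
Proof.
move=> hp h3 H /(Fp_eq_nat hp); rewrite natrX => E.
by have := e3_7 hp h3 H; rewrite E eqxx.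
Qed.

Local Open Scope nat_scope.

Lemma mo_dvd M a k : mult_order M a k -> forall j, a ^ j = 1 %[mod M] <-> k %| j.
Proof.
move=> [k0 [Hk Hmin]] j.
have E : forall q, (a ^ k) ^ q = 1 %[mod M].
  by move=> q; rewrite -modnXm Hk modnXm exp1n.
split => [Hj|/dvdnP [q ->]]; last by rewrite mulnC expnM; apply: E.
move: Hj; rewrite {1}(divn_eq j k) expnD [(j %/ k * k)]mulnC expnM -modnMml E modnMml mul1n.
rewrite /dvdn; case: (posnP (j %% k)) => [->//|H] /(Hmin _ H).
by rewrite leqNgt ltn_mod k0.
Qed.

Lemma three_mod4 j : 3 ^ j = 1 %[mod 4] <-> ~~ odd j.
Proof.
rewrite -{1}(odd_double_half j) expnD -muln2 [(_ * 2)]mulnC expnM.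
have E : (3 ^ 2) ^ j./2 = 1 %[mod 4] by rewrite -modnXm /= exp1n.
case: (odd j) => /=.
  by rewrite -modnMmr E modnMmr muln1.
by rewrite expn0 mul1n E.
Qed.

Lemma crt4 p a : prime p -> 3 < p ->
  a = 1 %[mod 4 * p] <-> a = 1 %[mod 4] /\ a = 1 %[mod p].
Proof.
move=> hp h3.
have c : coprime 4 p.
  rewrite coprime_sym prime_coprime //; apply/negP => /dvdn_leq H; have {H} := H isT => H.
  have : p = 4 by lia.
  by move=> E; move: hp; rewrite E.
split => [/eqP|[/eqP H1 /eqP H2]]; first by rewrite chinese_remainder // => /andP[/eqP ? /eqP ?].
by apply/eqP; rewrite chinese_remainder // H1 H2.
Qed.

Lemma fermat3 p : prime p -> 3 < p -> 3 ^ (p - 1) = 1 %[mod p].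
Proof.
move=> hp h3; rewrite subn1 -(totient_prime hp); apply: Euler_exp_totient.
rewrite prime_coprime //; apply/negP; rewrite dvdn_prime2 //; lia.
Qed.

Lemma odd_of_mod x : x %% 2 = 1 -> odd x.
Proof. by rewrite modn2; case: (odd x). Qed.
Lemma even_of_mod x : x %% 2 = 0 -> ~~ odd x.
Proof. by rewrite modn2; case: (odd x). Qed.

Ltac plia := repeat match goal with H : context [expn _ _] |- _ => clear H end; lia.

Theorem lemma9 (rho : nat) (hp : prime rho) (h3 : 3 < rho) :
  mult_order (4 * rho) 3 (rho - 1) <->
  ((rho = 5 %[mod 12] \/ rho = 7 %[mod 12]) /\ mult_order rho 3 (rho - 1)) \/
  (rho = 11 %[mod 12] /\ mult_order rho 3 ((rho - 1) %/ 2)).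
Proof.
move: rho hp h3 => p hp h3.
have n2 := n2 hp h3.
have hodd : odd p by apply/negP => /negP/(prime_oddPn hp) => E; plia.
have p2 : p %% 2 = 1 by rewrite modn2 hodd.
have p3 : p %% 3 != 0.
  apply/negP; rewrite -/(dvdn 3 p) dvdn_prime2 //; plia.
have F3 := fermat3 hp h3.
rewrite !(modn_small (m := 5)) ?(modn_small (m := 7)) ?(modn_small (m := 11)) //.
split.
- move=> H4.
  have exP : exists k, (0 < k) && (3 ^ k == 1 %[mod p]).
    by exists (p - 1); rewrite F3 eqxx andbT; plia.
  case: (ex_minnP exP) => d /andP[d0 /eqP Hd] Hmin.
  have Md : mult_order p 3 d.
    split=> //; split=> // j j0 Hj; apply: Hmin; by rewrite j0 Hj eqxx.
  have dn : d %| p - 1 by apply/(mo_dvd Md).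
  have [_ [_ Hmin4]] := H4.
  have Hl : forall l, 0 < l -> ~~ odd l -> d %| l -> p - 1 <= l.
    move=> l l0 le dl; apply: Hmin4 => //; apply/crt4 => //.
    by split; [apply/three_mod4 | apply/(mo_dvd Md)].
  case/boolP: (odd d) => dodd.
  + have dh : d %| (p - 1) %/ 2.
      by move: dn; rewrite {1}n2 Gauss_dvdl ?coprimen2.
    have := Hl (d * 2) ltac:(plia) ltac:(by rewrite oddM andbF) ltac:(exact: dvdn_mulr) => Hle.
    have hpos : 0 < (p - 1) %/ 2 by plia.
    move/(dvdn_leq hpos): dh => dh.
    have dE : d = (p - 1) %/ 2 by plia.
    have p4 : p %% 4 = 3.
      have : (p - 1) %/ 2 %% 2 = 1 by rewrite modn2 -dE dodd.
      plia.
    have : p %% 12 = 7 \/ p %% 12 = 11 by plia.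
    case=> Hp12.
      by have := K7n hp h3 Hp12; rewrite -dE Hd.
    by right; split => //; rewrite -dE.
  + have dE : d = p - 1.
      have hn : 0 < p - 1 by plia.
      have := Hl d d0 dodd (dvdnn d); move: (dvdn_leq hn dn); plia.
    have : p %% 12 = 5 \/ p %% 12 = 7 \/ p %% 12 = 1 \/ p %% 12 = 11 by plia.
    case=> [Hp12|[Hp12|Hp12]].
    * by left; split; [left|rewrite -dE].
    * by left; split; [right|rewrite -dE].
    * have := K1n hp h3 Hp12 => Hh.
      have hpos : 0 < (p - 1) %/ 2 by plia.
      have := Hmin ((p - 1) %/ 2); rewrite Hh eqxx hpos => /(_ isT).
      plia.
- case=> [[_ [k0 [Hk Hmin]]]|[Hp12 Mh]].
  + split=> //; split.
      apply/crt4 => //; split=> //; apply/three_mod4; apply: even_of_mod; plia.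
    move=> j j0 /crt4 [] // _; exact: Hmin.
  + split; first plia.
    split.
      apply/crt4 => //; split; first by apply/three_mod4; apply: even_of_mod; plia.
      by apply/(mo_dvd Mh); rewrite {2}n2 dvdn_mulr.
    move=> j j0 /crt4 [] // /three_mod4 je /(mo_dvd Mh) hj.
    have : (p - 1) %/ 2 * 2 %| j.
      rewrite Gauss_dvd ?hj /=; last first.
        by rewrite coprimen2; apply: odd_of_mod; plia.
      by rewrite dvdn2.
    by rewrite -n2 => /(dvdn_leq j0).
Qed.
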